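(* Let $n\ge2$ and let $\mathcal{A}$ be a complex algebra with basis $e_1,\dots,e_{n+1}$ whose structure constants satisfy ( * ), such that $\operatorname{Ann}\mathcal{A}=\langle e_{n+1}\rangle$, $e_1e_n=0$ and $e_i^2=e_{i+1}$ for all $1\le i\le n$. Suppose that the automorphisms of $\mathcal{A}/\langle e_{n+1}\rangle$ are exactly the linear maps $\bar e_1\mapsto\bar e_1+x\bar e_n$, $\bar e_i\mapsto\bar e_i$ ($2\le i\le n$), $x\in\mathbb{C}$, where $\bar e_i=e_i+\langle e_{n+1}\rangle$. Then the automorphisms of $\mathcal{A}$ are exactly the linear maps $e_1\mapsto e_1+xe_{n+1}$, $e_i\mapsto e_i$ ($2\le i\le n+1$), $x\in\mathbb{C}$.
   Context: Structure constants: $e_ie_j=\sum_kc_{ij}^ke_k$. Condition ( * ): $c_{ij}^k=0$ whenever $k\le\max\{i,j\}$. $\operatorname{Ann}\mathcal{A}=\{a\in\mathcal{A}: a\mathcal{A}+\mathcal{A}a=0\}$. *)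

(* Defs.v *)
From HB Require Import structures.
From mathcomp Require Import all_boot all_order all_algebra.
From mathcomp Require Import complex Rstruct.
From Stdlib Require Rdefinitions.
Set Implicit Arguments. Unset Strict Implicit. Unset Printing Implicit Defensive.
Import Order.TTheory GRing.Theory Num.Theory.
Local Open Scope ring_scope.
Local Open Scope nat_scope.
Local Open Scope ring_scope.

Definition C : fieldType := complex Rdefinitions.R.

(* Elements of an m-dimensional algebra = coordinate row vectors in C^m.
   Basis vectors are indexed 1..m as in the paper: e_k = vec m k. *)
Definition vec (m k : nat) : 'rV[C]_m := \row_(j < m) (if j.+1 == k then 1 else 0).

(* Product determined by structure constants c (1-based):
   e_i e_j = \sum_k c i j k e_k. *)
Definition amul (m : nat) (c : nat -> nat -> nat -> C) (u v : 'rV[C]_m) : 'rV[C]_m :=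
  \row_(k < m) \sum_(i < m) \sum_(j < m) u 0 i * v 0 j * c i.+1 j.+1 k.+1.

Definition cond_star (m : nat) (c : nat -> nat -> nat -> C) : Prop :=
  forall i j k : nat, (1 <= i)%N -> (i <= m)%N -> (1 <= j)%N -> (j <= m)%N -> (1 <= k)%N -> (k <= m)%N ->
    (k <= maxn i j)%N -> c i j k = 0.

Definition in_Ann (m : nat) (c : nat -> nat -> nat -> C) (a : 'rV[C]_m) : Prop :=
  forall b, amul c a b = 0 /\ amul c b a = 0.

Definition is_aut (m : nat) (c : nat -> nat -> nat -> C) (A : 'M[C]_m) : Prop :=
  A \in unitmx /\ forall u v, amul c (u *m A) (v *m A) = amul c u v *m A.

(* Main.v *)
Require Import Defs.
From mathcomp Require Import all_boot all_order all_algebra.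
From mathcomp Require Import zify.
Set Implicit Arguments. Unset Strict Implicit. Unset Printing Implicit Defensive.
Import Order.TTheory GRing.Theory Num.Theory.
Local Open Scope ring_scope.

Section L.
Variable m : nat.
Variable c : nat -> nat -> nat -> C.
Implicit Types u v w : 'rV[C]_m.

Lemma amulDl u v w : amul c (u + v) w = amul c u w + amul c v w.
Proof.
apply/rowP => k; rewrite !mxE -big_split; apply: eq_bigr => i _.
rewrite -big_split; apply: eq_bigr => j _; rewrite !mxE; by rewrite !mulrDl.
Qed.
Lemma amulDr u v w : amul c w (u + v) = amul c w u + amul c w v.
Proof.
apply/rowP => k; rewrite !mxE -big_split; apply: eq_bigr => i _.
rewrite -big_split; apply: eq_bigr => j _; rewrite !mxE; by rewrite mulrDr !mulrDl.
Qed.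
Lemma amulZl a u w : amul c (a *: u) w = a *: amul c u w.
Proof.
apply/rowP => k; rewrite !mxE mulr_sumr; apply: eq_bigr => i _.
rewrite mulr_sumr; apply: eq_bigr => j _; rewrite !mxE; by rewrite !mulrA.
Qed.
Lemma amulZr a u w : amul c w (a *: u) = a *: amul c w u.
Proof.
apply/rowP => k; rewrite !mxE mulr_sumr; apply: eq_bigr => i _.
rewrite mulr_sumr; apply: eq_bigr => j _; rewrite !mxE.
by rewrite mulrA (mulrC _ a) !mulrA.
Qed.
Lemma amul0l w : amul c 0 w = 0.
Proof. by apply/rowP => k; rewrite !mxE big1 // => i _; rewrite big1 // => j _; rewrite !mxE !mul0r. Qed.
Lemma amul0r w : amul c w 0 = 0.
Proof. by apply/rowP => k; rewrite !mxE big1 // => i _; rewrite big1 // => j _; rewrite !mxE mulr0 mul0r. Qed.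

Lemma vecE (i : 'I_m) : vec m i.+1 = 'e_i.
Proof. by apply/rowP => j; rewrite !mxE eqSS eqxx /=; case: eqP => [/val_inj ->|h]; [rewrite eqxx|case: eqP => // hh; case: h; rewrite hh]. Qed.

Lemma vec_mul (i : 'I_m) (A : 'M[C]_m) : vec m i.+1 *m A = row i A.
Proof. by rewrite vecE rowE. Qed.

End L.
Section M.
Variable n : nat.
Variable c : nat -> nat -> nat -> C.
Hypothesis cs : cond_star n.+1 c.

Definition res (w : 'rV[C]_n.+1) : 'rV[C]_n := \row_(j < n) w 0 (widen_ord (leqnSn n) j).
Definition blk (A : 'M[C]_n.+1) : 'M[C]_n := \matrix_(i < n, j < n) A (widen_ord (leqnSn n) i) (widen_ord (leqnSn n) j).

Lemma sum_recr0 m (F : 'I_m.+1 -> C) : F ord_max = 0 ->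
  \sum_(i < m.+1) F i = \sum_(i < m) F (widen_ord (leqnSn m) i).
Proof. by move=> h; rewrite big_ord_recr /= h addr0. Qed.

Lemma res_amul w1 w2 : res (amul c w1 w2) = amul c (res w1) (res w2).
Proof.
apply/rowP => k; rewrite !mxE sum_recr0; last first.
  apply: big1 => j _; rewrite cs ?mulr0 // /=; by move: (ltn_ord j) (ltn_ord k) => *; lia.
apply: eq_bigr => i _; rewrite sum_recr0; last first.
  rewrite cs ?mulr0 // /=; by move: (ltn_ord i) (ltn_ord k) => *; lia.
by apply: eq_bigr => j _; rewrite !mxE.
Qed.

Lemma res_mul (A : 'M[C]_n.+1) (hA : forall j : 'I_n, A ord_max (widen_ord (leqnSn n) j) = 0) w :
  res (w *m A) = res w *m blk A.
Proof.
apply/rowP => j; rewrite !mxE big_ord_recr /= hA mulr0 addr0.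
by apply: eq_bigr => k _; rewrite !mxE.
Qed.

Lemma widen_lift (k : 'I_n) : widen_ord (leqnSn n) k = lift ord_max k.
Proof. by apply: val_inj; rewrite /= /bump leqNgt ltn_ord. Qed.

Lemma vec_last (j : 'I_n) : vec n.+1 n.+1 0 (widen_ord (leqnSn n) j) = 0.
Proof.
rewrite mxE /= eqSS; have -> : ((j : nat) == n) = false by rewrite ltn_eqF.
by [].
Qed.

Lemma res_decomp w1 w2 : res w1 = res w2 ->
  w1 = w2 + (w1 0 ord_max - w2 0 ord_max) *: vec n.+1 n.+1.
Proof.
move=> h; apply/rowP => j; case: (unliftP ord_max j) => [k ->|->].
  rewrite !mxE -widen_lift; have := congr1 (fun w : 'rV[C]_n => w 0 k) h; rewrite !mxE => ->.
  by rewrite /= eqSS ltn_eqF ?mulr0 ?addr0.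
by rewrite !mxE /= eqxx mulr1 addrC subrK.
Qed.

Lemma res_surj u : exists w, res w = u.
Proof.
exists (\row_(j < n.+1) (if unlift ord_max j is Some k then u 0 k else 0)).
by apply/rowP => k; rewrite !mxE widen_lift liftK.
Qed.

Lemma res_vec i : res (vec n.+1 i) = vec n i.
Proof. by apply/rowP => j; rewrite !mxE. Qed.

Lemma resD w1 w2 : res (w1 + w2) = res w1 + res w2.
Proof. by apply/rowP => j; rewrite !mxE. Qed.
Lemma resZ a w : res (a *: w) = a *: res w.
Proof. by apply/rowP => j; rewrite !mxE. Qed.

Lemma last_row (M : 'M[C]_n.+1) t : vec n.+1 n.+1 *m M = t *: vec n.+1 n.+1 ->
  forall j : 'I_n, M ord_max (widen_ord (leqnSn n) j) = 0.
Proof.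
move=> h j; have e1 : vec n.+1 n.+1 *m M = row ord_max M := vec_mul ord_max M.
have := congr1 (fun w : 'rV[C]_n.+1 => w 0 (widen_ord (leqnSn n) j)) h.
rewrite e1 /= mxE => ->; by rewrite mxE vec_last mulr0.
Qed.

End M.

Theorem mainTheorem10 (n : nat) (c : nat -> nat -> nat -> C) :
  (2 <= n)%N ->
  cond_star n.+1 c ->
  (forall a : 'rV[C]_n.+1, in_Ann c a <-> exists t : C, a = t *: vec n.+1 n.+1) ->
  amul c (vec n.+1 1) (vec n.+1 n) = 0 ->
  (forall i : nat, (1 <= i)%N -> (i <= n)%N -> amul c (vec n.+1 i) (vec n.+1 i) = vec n.+1 i.+1) ->
  (* automorphisms of the quotient A/<e_{n+1}>, whose structure constants are
     those of c with indices restricted to 1..n *)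
  (forall B : 'M[C]_n, is_aut c B <->
     exists x : C, vec n 1 *m B = vec n 1 + x *: vec n n /\
       forall i : nat, (2 <= i)%N -> (i <= n)%N -> vec n i *m B = vec n i) ->
  forall A : 'M[C]_n.+1, is_aut c A <->
     exists x : C, vec n.+1 1 *m A = vec n.+1 1 + x *: vec n.+1 n.+1 /\
       forall i : nat, (2 <= i <= n.+1)%N -> vec n.+1 i *m A = vec n.+1 i.
Proof.
move=> hn cs hAnn h1n hsq hB A.
set en := vec n.+1 n.+1.
have annE : in_Ann c en by apply/hAnn; exists 1; rewrite scale1r.
have annl : forall w, amul c en w = 0 by move=> w; case: (annE w).
have annr : forall w, amul c w en = 0 by move=> w; case: (annE w).
have sqE : forall k y, amul c (vec n.+1 k + y *: en) (vec n.+1 k + y *: en)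
    = amul c (vec n.+1 k) (vec n.+1 k).
  by move=> k y; rewrite !amulDl !amulDr !amulZl !amulZr !annl !annr !scaler0 !addr0.
split.
- case=> Aunit Amul.
  have [t ht] : exists t, en *m A = t *: en.
    apply/hAnn => b; have -> : b = (b *m invmx A) *m A by rewrite mulmxKV.
    by rewrite !Amul annl annr mul0mx.
  have t0 : t != 0.
    apply/eqP => t0; move: ht; rewrite t0 scale0r => ht.
    have := congr1 (fun w : 'rV[C]_n.+1 => (w *m invmx A) 0 ord_max) ht.
    rewrite /= mulmxK // mul0mx /en !mxE /= eqxx => h; move: (@oner_neq0 C); by rewrite h eqxx.
  have ht' : en *m invmx A = t^-1 *: en.
    have := congr1 (mulmx^~ (invmx A)) ht; rewrite /= mulmxK // => h.
    by rewrite {2}h -(scalemxAl t en (invmx A)) scalerA mulVf // scale1r.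
  have hl := last_row ht; have hl' := last_row ht'.
  have BB : blk A *m blk (invmx A) = 1%:M.
    apply/matrixP => i j; rewrite [RHS]mxE.
    have := congr1 (fun M : 'M[C]_n.+1 => M (widen_ord (leqnSn n) i) (widen_ord (leqnSn n) j)) (mulmxV Aunit).
    rewrite /= !mxE sum_recr0; last by rewrite hl' mulr0.
    move=> e; rewrite (_ : (i == j) = (widen_ord (leqnSn n) i == widen_ord (leqnSn n) j)) // -e.
    by apply: eq_bigr => k _; rewrite !mxE.
  have Bunit := (mulmx1_unit BB).1.
  have Bmul : forall u v, amul c (u *m blk A) (v *m blk A) = amul c u v *m blk A.
    move=> u v; have [wu <-] := res_surj u; have [wv <-] := res_surj v.
    by rewrite -!res_mul // -res_amul // Amul res_mul // res_amul.
  have [x [hx1 hxi]] := (hB (blk A)).1 (conj Bunit Bmul).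
  have ha : forall k, (2 <= k <= n)%N -> exists y, vec n.+1 k *m A = vec n.+1 k + y *: en.
    move=> k /andP [hk1 hk2]; eexists; apply: res_decomp.
    by rewrite res_mul // res_vec hxi.
  have [y1 hy1] : exists y, vec n.+1 1 *m A = vec n.+1 1 + x *: vec n.+1 n + y *: en.
    eexists; apply: res_decomp.
    by rewrite res_mul // res_vec hx1 resD resZ !res_vec.
  have [yn hyn] := ha n (ltac:(by rewrite hn leqnn)).
  have x0 : x = 0.
    have := Amul (vec n.+1 1) (vec n.+1 n); rewrite h1n mul0mx hy1 hyn.
    rewrite !amulDl !amulDr !amulZl !amulZr !annl !annr !scaler0 !addr0 h1n hsq ?(ltnW hn) //.
    move=> h; have := congr1 (fun w : 'rV[C]_n.+1 => w 0 ord_max) h.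
    by rewrite /= !mxE /= eqxx mulr1 add0r.
  move: hy1; rewrite x0 scale0r addr0 => hy1.
  exists y1; split => // i /andP [hi1 hi2].
  case: i hi1 hi2 => [|k] // hk1 hk2.
  have [y hy] : exists y, vec n.+1 k *m A = vec n.+1 k + y *: en.
    case: (ltnP 1 k) => hk; first by apply: ha; rewrite hk.
    have -> : k = 1%N by lia.
    by exists y1.
  by rewrite -hsq ?(ltac:(lia)) // -Amul hy sqE.
- case=> x [h1 hi].
  have Aeq : A = 1%:M + x *: delta_mx 0 ord_max.
    apply/matrixP => i j.
    have -> : A i j = (vec n.+1 i.+1 *m A) 0 j by rewrite vec_mul mxE.
    case: i => [[|k] hk].
      rewrite h1 !mxE /= eqSS.
      have -> : (Ordinal hk == j) = (0 == (j:nat))%N by [].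
      have -> : (j == ord_max) = ((j:nat) == n)%N by [].
      rewrite eqSS [(0%N == _)]eq_sym; case: ((j:nat) == 0%N); case: ((j:nat) == n); by rewrite /= ?mulr1n ?mulr0n.
    rewrite hi /=; last by lia.
    rewrite !mxE /= eqSS mulr0 addr0.
    have -> : (Ordinal hk == j) = (k.+1 == j)%N by [].
    by rewrite eq_sym; case: (_ == _)%N; rewrite /= ?mulr1n ?mulr0n.
  set D := delta_mx 0 ord_max : 'M[C]_n.+1.
  have DD : D *m D = 0.
    rewrite mul_delta_mx_cond (_ : (ord_max == 0) = false) ?mulr0n //.
    by apply/eqP => /(congr1 val) /= h; lia.
  have uA : forall w, w *m A = w + (w 0 0 * x) *: en.
    move=> w; rewrite Aeq mulmxDr mulmx1 -(scalemxAr x w D); congr (_ + _).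
    apply/rowP => k; rewrite !mxE big_ord_recl big1 ?addr0; last first.
      by move=> l _; rewrite !mxE (_ : (lift ord0 l == 0) = false) ?mulr0 // eq_sym (negbTE (neq_lift _ _)).
    rewrite !mxE /=.
    have -> : (k == ord_max) = ((k:nat) == n)%N by [].
    rewrite eqSS; case: (_ == _)%N; by rewrite /= ?mulr1n ?mulr0n ?mulr1 ?mulr0 // mulrC.
  split.
    have : A *m (1%:M - x *: D) = 1%:M.
      rewrite Aeq mulmxDl !mulmxDr !mul1mx !mulmx1 mulmxN -(scalemxAl x D) -(scalemxAr x D D) DD.
      by rewrite !scaler0 oppr0 addr0 subrK.
    by case/mulmx1_unit.
  move=> u v; rewrite !uA !amulDl !amulDr !amulZl !amulZr !annl !annr !scaler0 !addr0.
  have -> : (amul c u v) 0 0 = 0.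
    rewrite mxE big1 // => i _; rewrite big1 // => j _; rewrite cs ?mulr0 //= .
    by lia.
  by rewrite mul0r scale0r addr0.
Qed.
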